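(* Let $G$ be a graph with no induced $P_7$, $C_4$, $C_6$ or $C_7$, let $H=(B_1,\dots,B_5)$ be a maximal nice blowup of $C_5$ in $G$, and let $i\in\{1,\dots,5\}$. If $xy$ is an edge with $x,y\in A_3(i)$, then $N_{B_i}(x)=N_{B_i}(y)$.
   Context: Indices modulo $5$. A nice blowup of $C_5$ is a tuple $(B_1,\dots,B_5)$ of pairwise disjoint cliques such that every vertex of $B_j$ has a neighbor in $B_{j-1}$ and in $B_{j+1}$, $B_j$ is anticomplete to $B_{j+2}$, and there are no $a\in B_j$, distinct $b,c\in B_{j+1}$, $d\in B_{j+2}$ with $G[\{a,b,c,d\}]\cong P_4$; $V(H)=\bigcup B_j$; maximal means no nice blowup has vertex set strictly containing $V(H)$. For $v\notin V(H)$, $\operatorname{supp}(v)$ is the set of $j$ such that $v$ has a neighbor in $B_j$; $A_3(i)=\{v\notin V(H):\operatorname{supp}(v)=\{i-1,i,i+1\}\}$; $N_S(v)$ is the set of neighbors of $v$ in $S$. *)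

(* Defs.v *)
From mathcomp Require Import all_boot.
Set Implicit Arguments. Unset Strict Implicit. Unset Printing Implicit Defensive.

Definition simple_graph (T : finType) (adj : rel T) : Prop :=
  symmetric adj /\ irreflexive adj.

Definition induced_path (T : finType) (adj : rel T) (s : seq T) : Prop :=
  uniq s /\ forall (x0 : T) i j, i < size s -> j < size s ->
    adj (nth x0 s i) (nth x0 s j) = (i.+1 == j) || (j.+1 == i).

Definition induced_cycle (T : finType) (adj : rel T) (s : seq T) : Prop :=
  uniq s /\ forall (x0 : T) i j, i < size s -> j < size s ->
    adj (nth x0 s i) (nth x0 s j) =
      (j == i.+1 %% size s) || (i == j.+1 %% size s).

Definition has_induced_P (T : finType) (adj : rel T) (k : nat) : Prop :=
  exists s : seq T, size s = k /\ induced_path adj s.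
Definition has_induced_C (T : finType) (adj : rel T) (k : nat) : Prop :=
  exists s : seq T, size s = k /\ induced_cycle adj s.

Definition induces_P4 (T : finType) (adj : rel T) (a b c d : T) : Prop :=
  exists s : seq T, perm_eq s [:: a; b; c; d] /\ induced_path adj s.

Definition nxt (j : 'I_5) : 'I_5 := inord ((j + 1) %% 5).
Definition prv (j : 'I_5) : 'I_5 := inord ((j + 4) %% 5).

Definition is_clique (T : finType) (adj : rel T) (A : {set T}) : Prop :=
  forall x y, x \in A -> y \in A -> x != y -> adj x y.

Definition anticomplete (T : finType) (adj : rel T) (A B : {set T}) : Prop :=
  forall x y, x \in A -> y \in B -> ~~ adj x y.

Definition nice_blowup (T : finType) (adj : rel T) (B : 'I_5 -> {set T}) : Prop :=
  (forall j k, j != k -> [disjoint B j & B k]) /\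
  (forall j, is_clique adj (B j)) /\
  (forall j v, v \in B j ->
     (exists2 u, u \in B (prv j) & adj v u) /\
     (exists2 u, u \in B (nxt j) & adj v u)) /\
  (forall j, anticomplete adj (B j) (B (nxt (nxt j)))) /\
  (forall j a b c d, a \in B j -> b \in B (nxt j) -> c \in B (nxt j) ->
     b != c -> d \in B (nxt (nxt j)) -> ~ induces_P4 adj a b c d).

Definition vert (T : finType) (B : 'I_5 -> {set T}) : {set T} :=
  \bigcup_(j < 5) B j.

Definition maximal_nice_blowup (T : finType) (adj : rel T)
    (B : 'I_5 -> {set T}) : Prop :=
  nice_blowup adj B /\
  ~ (exists B' : 'I_5 -> {set T}, nice_blowup adj B' /\ vert B \proper vert B').

Definition supp (T : finType) (adj : rel T) (B : 'I_5 -> {set T}) (v : T)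
  : {set 'I_5} := [set j | [exists u in B j, adj v u]].

Definition A3 (T : finType) (adj : rel T) (B : 'I_5 -> {set T}) (i : 'I_5)
  : {set T} :=
  [set v | (v \notin vert B) && (supp adj B v == [set prv i; i; nxt i])].

Definition nbhd_in (T : finType) (adj : rel T) (S : {set T}) (v : T) : {set T} :=
  [set u in S | adj v u].

(* Main.v *)
Require Import Defs.
From mathcomp Require Import all_boot.
Set Implicit Arguments. Unset Strict Implicit. Unset Printing Implicit Defensive.

Ltac mksym sym := repeat match goal with
  | H : ?f ?a ?b = ?c |- _ =>
      lazymatch goal with
      | _ : f b a = c |- _ => fail
      | _ => let H' := fresh "S" in have H' : f b a = c by rewrite sym
      end
  end.

Ltac neqtac := apply/eqP => E; subst;
  match goal with H1 : ?f ?a ?b = true, H2 : ?f ?a ?b = false |- _ =>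
    rewrite H1 in H2; discriminate H2 end.

Ltac uniqtac := rewrite /= !inE !negb_or; repeat (apply/andP; split); try done; try neqtac.

Lemma mkC4 (T : finType) (adj : rel T) (a0 a1 a2 a3 : T) :
  simple_graph adj ->
  adj a0 a1 = true -> adj a1 a2 = true -> adj a2 a3 = true -> adj a3 a0 = true ->
  adj a0 a2 = false -> adj a1 a3 = false -> a0 != a2 -> a1 != a3 ->
  has_induced_C adj 4.
Proof.
move=> [sym irr] h01 h12 h23 h30 n02 n13 d02 d13.
have i0 := irr a0; have i1 := irr a1; have i2 := irr a2; have i3 := irr a3.
mksym sym.
exists [:: a0; a1; a2; a3]; split => //; split.
  by uniqtac.
move=> x0 i j hi hj.
case: i hi => [|[|[|[|i]]]] hi //; case: j hj => [|[|[|[|j]]]] hj //=.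
Qed.

Lemma mkC6 (T : finType) (adj : rel T) (a0 a1 a2 a3 a4 a5 : T) :
  simple_graph adj ->
  adj a0 a1 = true -> adj a1 a2 = true -> adj a2 a3 = true -> adj a3 a4 = true ->
  adj a4 a5 = true -> adj a5 a0 = true ->
  adj a0 a2 = false -> adj a0 a3 = false -> adj a0 a4 = false ->
  adj a1 a3 = false -> adj a1 a4 = false -> adj a1 a5 = false ->
  adj a2 a4 = false -> adj a2 a5 = false -> adj a3 a5 = false ->
  has_induced_C adj 6.
Proof.
move=> [sym irr] h01 h12 h23 h34 h45 h50 n02 n03 n04 n13 n14 n15 n24 n25 n35.
have i0 := irr a0; have i1 := irr a1; have i2 := irr a2; have i3 := irr a3.
have i4 := irr a4; have i5 := irr a5.
mksym sym.
exists [:: a0; a1; a2; a3; a4; a5]; split => //; split.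
  by uniqtac.
move=> x0 i j hi hj.
case: i hi => [|[|[|[|[|[|i]]]]]] hi //; case: j hj => [|[|[|[|[|[|j]]]]]] hj //=.
Qed.

Lemma mkC7 (T : finType) (adj : rel T) (a0 a1 a2 a3 a4 a5 a6 : T) :
  simple_graph adj ->
  adj a0 a1 = true -> adj a1 a2 = true -> adj a2 a3 = true -> adj a3 a4 = true ->
  adj a4 a5 = true -> adj a5 a6 = true -> adj a6 a0 = true ->
  adj a0 a2 = false -> adj a0 a3 = false -> adj a0 a4 = false -> adj a0 a5 = false ->
  adj a1 a3 = false -> adj a1 a4 = false -> adj a1 a5 = false -> adj a1 a6 = false ->
  adj a2 a4 = false -> adj a2 a5 = false -> adj a2 a6 = false ->
  adj a3 a5 = false -> adj a3 a6 = false -> adj a4 a6 = false ->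
  has_induced_C adj 7.
Proof.
move=> [sym irr] h01 h12 h23 h34 h45 h56 h60 n02 n03 n04 n05 n13 n14 n15 n16 n24 n25 n26 n35 n36 n46.
have i0 := irr a0; have i1 := irr a1; have i2 := irr a2; have i3 := irr a3.
have i4 := irr a4; have i5 := irr a5; have i6 := irr a6.
mksym sym.
exists [:: a0; a1; a2; a3; a4; a5; a6]; split => //; split.
  by uniqtac.
move=> x0 i j hi hj.
case: i hi => [|[|[|[|[|[|[|i]]]]]]] hi //; case: j hj => [|[|[|[|[|[|[|j]]]]]]] hj //=.
Qed.

Lemma mkP4 (T : finType) (adj : rel T) (a0 a1 a2 a3 : T) :
  simple_graph adj ->
  adj a0 a1 = true -> adj a1 a2 = true -> adj a2 a3 = true ->
  adj a0 a2 = false -> adj a0 a3 = false -> adj a1 a3 = false ->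
  induces_P4 adj a0 a1 a2 a3.
Proof.
move=> [sym irr] h01 h12 h23 n02 n03 n13.
have i0 := irr a0; have i1 := irr a1; have i2 := irr a2; have i3 := irr a3.
mksym sym.
exists [:: a0; a1; a2; a3]; split => //; split.
  by uniqtac.
move=> x0 i j hi hj.
case: i hi => [|[|[|[|i]]]] hi //; case: j hj => [|[|[|[|j]]]] hj //=.
Qed.

Lemma P4_cases (T : finType) (adj : rel T) (a b c d : T) :
  simple_graph adj -> induces_P4 adj a b c d -> adj b c -> ~~ adj a d ->
  (adj a b && adj c d && ~~ adj a c && ~~ adj b d) ||
  (adj a c && adj b d && ~~ adj a b && ~~ adj c d).
Proof.
move=> [sym irr] [s [Hp [Hu Hpat]]] Hbc Had.
have Hs : size s = 4 by rewrite (perm_size Hp).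
have Hu4 : uniq [:: a; b; c; d] by rewrite -(perm_uniq Hp).
have Ha : a \in s by rewrite (perm_mem Hp) !inE eqxx.
have Hb : b \in s by rewrite (perm_mem Hp) !inE eqxx ?orbT.
have Hc : c \in s by rewrite (perm_mem Hp) !inE eqxx ?orbT.
have Hd : d \in s by rewrite (perm_mem Hp) !inE eqxx ?orbT.
move: Hs Hu Hpat Hp Ha Hb Hc Hd.
case: s => [|s0 [|s1 [|s2 [|s3 [|? ?]]]]] //= _ _ Hpat _ Ha Hb Hc Hd.
have h01 : adj s0 s1 = true := Hpat s0 0 1 erefl erefl.
have h12 : adj s1 s2 = true := Hpat s0 1 2 erefl erefl.
have h23 : adj s2 s3 = true := Hpat s0 2 3 erefl erefl.
have h02 : adj s0 s2 = false := Hpat s0 0 2 erefl erefl.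
have h03 : adj s0 s3 = false := Hpat s0 0 3 erefl erefl.
have h13 : adj s1 s3 = false := Hpat s0 1 3 erefl erefl.
have i0 := irr s0; have i1 := irr s1; have i2 := irr s2; have i3 := irr s3.
clear Hpat. mksym sym.
move: Hbc Had Hu4; move: Ha Hb Hc Hd.
rewrite !inE => /or4P [] /eqP -> /or4P [] /eqP -> /or4P [] /eqP -> /or4P [] /eqP ->;
  rewrite ?h01 ?h12 ?h23 ?h02 ?h03 ?h13 ?i0 ?i1 ?i2 ?i3 ?S ?S0 ?S1 ?S2 ?S3 ?S4 /= ?inE ?eqxx /= ?orbT /= ?andbF //.
Qed.

Lemma noC4 (T : finType) (adj : rel T) (a b c d : T) :
  simple_graph adj -> ~ has_induced_C adj 4 ->
  adj a b -> adj b c -> adj c d -> adj d a -> ~~ adj a c -> ~~ adj b d ->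
  a != c -> b != d -> False.
Proof.
move=> G nC h1 h2 h3 h4 n1 n2 d1 d2; apply: nC.
by apply: (mkC4 (a0:=a) (a1:=b) (a2:=c) (a3:=d) G) => //; apply: negbTE.
Qed.

Lemma comp4 (T : finType) (adj : rel T) (K : {set T}) (a b p q : T) :
  simple_graph adj -> ~ has_induced_C adj 4 -> is_clique adj K ->
  adj a b -> a \notin K -> b \notin K -> p \in K -> q \in K ->
  adj a p -> ~~ adj b p -> adj b q -> ~~ adj a q -> False.
Proof.
move=> G nC cl hab aK bK pK qK hap nbp hbq naq.
have [sym irr] := G.
have pq : p != q by apply/eqP => E; subst; rewrite hbq in nbp.
apply: (noC4 G nC (a:=a) (b:=p) (c:=q) (d:=b)) => //; try by rewrite sym.
- exact: cl.
- by apply/eqP => E; subst; rewrite qK in aK.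
- by apply/eqP => E; subst; rewrite pK in bK.
Qed.


Lemma a_aux (T : finType) (adj : rel T) (L1 L4 : {set T}) (x y u w : T) :
  simple_graph adj -> ~ has_induced_C adj 4 -> ~ has_induced_C adj 6 ->
  is_clique adj L1 -> is_clique adj L4 -> [disjoint L1 & L4] ->
  anticomplete adj L1 L4 ->
  x \notin L1 -> y \notin L1 -> u \notin L1 -> w \notin L1 ->
  x \notin L4 -> y \notin L4 -> u \notin L4 -> w \notin L4 ->
  (exists2 p, p \in L1 & adj x p) -> (exists2 p, p \in L1 & adj y p) ->
  (exists2 p, p \in L1 & adj u p) -> (exists2 p, p \in L1 & adj w p) ->
  (exists2 p, p \in L4 & adj x p) -> (exists2 p, p \in L4 & adj y p) ->
  (exists2 p, p \in L4 & adj u p) -> (exists2 p, p \in L4 & adj w p) ->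
  adj x y -> adj x u -> adj u w -> ~~ adj y u -> ~~ adj x w -> ~~ adj y w ->
  x != w -> y != u ->
  (forall s, s \in L4 -> adj x s -> ~~ adj w s) -> False.
Proof.
move=> G nC4 nC6 cl1 cl4 dj ac x1 y1 u1 w1 x4 y4 u4 w4
  [px px1 hpx] [py py1 hpy] [pu pu1 hpu] [pw pw1 hpw]
  [sx sx4 hsx] [sy sy4 hsy] [su su4 hsu] [sw sw4 hsw]
  hxy hxu huw nyu nxw nyw dxw dyu hcase.
have [sym irr] := G.
have dne : forall p s, p \in L1 -> s \in L4 -> p != s.
  by move=> p s Hp Hs; apply/eqP => E; subst; rewrite (disjointFr dj Hp) in Hs.
have acs : forall p s, p \in L1 -> s \in L4 -> adj s p = false.
  by move=> p s Hp Hs; rewrite sym; apply/negbTE; apply: ac.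
have acp : forall p s, p \in L1 -> s \in L4 -> adj p s = false.
  by move=> p s Hp Hs; apply/negbTE; apply: ac.
have s2a : forall s, s \in L4 -> adj w s -> adj u s.
  move=> s Hs Hws; apply/contraT => Hus.
  have Hwsu : adj w su.
    apply/contraT => Hn.
    by elim: (comp4 G nC4 cl4 huw u4 w4 su4 Hs hsu Hn Hws Hus).
  have Hxsu : ~~ adj x su by apply/negP => /(hcase _ su4); rewrite Hwsu.
  have Hwsx : ~~ adj w sx by apply: hcase.
  have Husx : ~~ adj u sx.
    apply/negP => Hu.
    by elim: (comp4 G nC4 cl4 huw u4 w4 sx4 Hs Hu Hwsx Hws Hus).
  by elim: (comp4 G nC4 cl4 hxu x4 u4 sx4 su4 hsx Husx hsu Hxsu).
have s2b : forall s, s \in L4 -> adj x s -> adj u s.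
  move=> s Hs Hxs; apply/contraT => Hus.
  have Husw := s2a _ sw4 hsw.
  have Hxsw : ~~ adj x sw by apply/negP => /(hcase _ sw4); rewrite hsw.
  by elim: (comp4 G nC4 cl4 hxu x4 u4 Hs sw4 Hxs Hus Husw Hxsw).
case: (boolP [exists p, (p \in L1) && (adj y p && adj w p)]) => [/existsP [p /and3P [Hp Hyp Hwp]] | /existsPn Hno].
-
  case: (boolP [exists s, (s \in L4) && (adj x s && adj y s)]) => [/existsP [s /and3P [Hs Hxs Hys]] | /existsPn Hno2]; last first.
    have Hysx : ~~ adj y sx by move: (Hno2 sx); rewrite sx4 hsx.
    have Hxsy : ~~ adj x sy by move: (Hno2 sy); rewrite sy4 hsy andbT.
    by elim: (comp4 G nC4 cl4 hxy x4 y4 sx4 sy4 hsx Hysx hsy Hxsy).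
  have Hus := s2b _ Hs Hxs.
  have Hup : ~~ adj u p.
    apply/negP => Hup.
    apply: (noC4 G nC4 (a:=y) (b:=p) (c:=u) (d:=s)) => //; try by rewrite sym.
    - by rewrite acp.
    - exact: dne.
  have Hxp : ~~ adj x p.
    apply/negP => Hxp.
    apply: (noC4 G nC4 (a:=p) (b:=w) (c:=u) (d:=x)) => //; try by rewrite sym.
    - by apply/eqP => E; subst; rewrite Hp in u1.
    - by rewrite eq_sym.
  have Hypx : adj y px.
    apply/contraT => Hn.
    by elim: (comp4 G nC4 cl1 hxy x1 y1 px1 Hp hpx Hn Hyp Hxp).
  have Hupx : ~~ adj u px.
    apply/negP => Hupx.
    apply: (noC4 G nC4 (a:=y) (b:=px) (c:=u) (d:=s)) => //; try by rewrite sym.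
    - by rewrite acp.
    - exact: dne.
  have Hxpu : adj x pu.
    apply/contraT => Hn.
    by elim: (comp4 G nC4 cl1 hxu x1 u1 px1 pu1 hpx Hupx hpu Hn).
  have Hypu : adj y pu.
    apply/contraT => Hn.
    have hyx : adj y x by rewrite sym.
    by elim: (comp4 G nC4 cl1 hyx y1 x1 Hp pu1 Hyp Hxp Hxpu Hn).
  apply: (noC4 G nC4 (a:=y) (b:=pu) (c:=u) (d:=s)) => //; try by rewrite sym.
  - by rewrite acp.
  - exact: dne.
-
  case: (boolP [exists s, (s \in L4) && (adj y s && adj w s)]) => [/existsP [s /and3P [Hs Hys Hws]] | /existsPn Hno2].
    have Hus := s2a _ Hs Hws.
    have Hxs : ~~ adj x s by apply/negP => /(hcase _ Hs); rewrite Hws.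
    apply: (noC4 G nC4 (a:=y) (b:=s) (c:=u) (d:=x)) => //; try by rewrite sym.
    by apply/eqP => E; subst; rewrite Hs in x4.
  have Hypw : adj y pw = false by move: (Hno pw); rewrite pw1 hpw andbT => /negbTE.
  have Hwpy : adj w py = false by move: (Hno py); rewrite py1 hpy /= => /negbTE.
  have Hysw : adj y sw = false by move: (Hno2 sw); rewrite sw4 hsw andbT => /negbTE.
  have Hwsy : adj w sy = false by move: (Hno2 sy); rewrite sy4 hsy /= => /negbTE.
  apply: nC6; apply: (mkC6 (a0:=y) (a1:=py) (a2:=pw) (a3:=w) (a4:=sw) (a5:=sy) G) => //.
  - apply: cl1 => //; apply/eqP => E; subst; by rewrite hpy in Hypw.
  - by rewrite sym.
  - apply: cl4 => //; apply/eqP => E; subst; by rewrite hsw in Hwsy.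
  - by rewrite sym.
  - exact: negbTE.
  - by rewrite sym.
  - by rewrite acp.
  - by rewrite acp.
  - by rewrite acp.
  - by rewrite acp.
Qed.

Ltac tobool := repeat match goal with
  | H : is_true (~~ ?f ?a ?b) |- _ => move/negbTE: H => H
  end.

Lemma c1_aux (T : finType) (adj : rel T) (L1 L2 L3 L4 : {set T}) (z b c d : T) :
  simple_graph adj -> ~ has_induced_C adj 6 -> ~ has_induced_C adj 7 ->
  is_clique adj L1 -> is_clique adj L4 ->
  b \in L1 -> c \in L1 -> d \in L2 ->
  (exists2 r, r \in L3 & adj d r) ->
  (forall r, r \in L3 -> exists2 s, s \in L4 & adj r s) ->
  (exists2 s, s \in L4 & adj z s) ->
  (forall v, v \in L2 -> ~~ adj z v) -> (forall v, v \in L3 -> ~~ adj z v) ->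
  anticomplete adj L4 L1 -> anticomplete adj L4 L2 -> anticomplete adj L3 L1 ->
  adj z b -> ~~ adj z c -> adj d c -> ~~ adj d b -> False.
Proof.
move=> G nC6 nC7 cl1 cl4 Hb Hc Hd [r Hr hdr] nb4 [s' Hs' hzs'] nz2 nz3 a41 a42 a31
  hzb nzc hdc ndb.
have [sym irr] := G.
have [s Hs hrs] := nb4 r Hr.
have hcb : adj c b by apply: cl1 => //; apply/eqP => E; subst; rewrite hzb in nzc.
have nzr := nz3 r Hr. have nzd := nz2 d Hd.
have nsd := a42 s d Hs Hd. have nsc := a41 s c Hs Hc. have nsb := a41 s b Hs Hb.
have ns'd := a42 s' d Hs' Hd. have ns'c := a41 s' c Hs' Hc. have ns'b := a41 s' b Hs' Hb.
have nrc := a31 r c Hr Hc. have nrb := a31 r b Hr Hb.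
have e1 : adj z b = true := hzb. have e2 : adj d c = true := hdc.
have e3 : adj c b = true := hcb. have e4 : adj d r = true := hdr.
have e5 : adj r s = true := hrs. have e6 : adj z s' = true := hzs'.
clear hzb hdc hcb hdr hrs hzs'.
tobool. mksym sym.
case Hzs : (adj z s).
  by apply: nC6; apply: (mkC6 (a0:=z) (a1:=s) (a2:=r) (a3:=d) (a4:=c) (a5:=b) G).
case Hs'r : (adj s' r).
  by apply: nC6; apply: (mkC6 (a0:=z) (a1:=s') (a2:=r) (a3:=d) (a4:=c) (a5:=b) G).
have e7 : adj s' s = true.
  by apply: cl4 => //; apply/eqP => E; subst; rewrite sym Hs'r in e5.
have := sym s' s; rewrite e7 => e8.
by apply: nC7; apply: (mkC7 (a0:=z) (a1:=s') (a2:=s) (a3:=r) (a4:=d) (a5:=c) (a6:=b) G).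
Qed.

Lemma c3a (T : finType) (adj : rel T) (K0 K1 K2 K3 K4 : {set T}) (z a c d : T) :
  simple_graph adj -> ~ has_induced_C adj 6 ->
  a \in K4 -> c \in K0 -> d \in K1 ->
  (exists2 r, r \in K3 & adj a r) ->
  (forall d r, d \in K1 -> r \in K3 -> exists2 q, q \in K2 & adj d q && adj q r) ->
  (forall v, v \in K2 -> ~~ adj z v) -> (forall v, v \in K3 -> ~~ adj z v) ->
  anticomplete adj K4 K2 -> anticomplete adj K4 K1 -> anticomplete adj K3 K1 ->
  anticomplete adj K3 K0 -> anticomplete adj K2 K0 ->
  adj a z -> adj c d -> ~~ adj a c -> ~~ adj z d -> adj z c -> False.
Proof.
move=> G nC6 Ha Hc Hd [r Hr har] g1 nz2 nz3 a42 a41 a31 a30 a20 haz hcd nac nzd hzc.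
have [sym irr] := G.
have [q Hq /andP [hdq hqr]] := g1 d r Hd Hr.
have nzr := nz3 r Hr. have nzq := nz2 q Hq.
have naq := a42 a q Ha Hq. have nad := a41 a d Ha Hd. have nrd := a31 r d Hr Hd.
have nrc := a30 r c Hr Hc. have nqc := a20 q c Hq Hc.
have e1 : adj a z = true := haz. have e2 : adj c d = true := hcd.
have e3 : adj a r = true := har. have e4 : adj d q = true := hdq.
have e5 : adj q r = true := hqr. have e6 : adj z c = true := hzc.
clear haz hcd har hdq hqr hzc.
tobool. mksym sym.
by apply: nC6; apply: (mkC6 (a0:=z) (a1:=a) (a2:=r) (a3:=q) (a4:=d) (a5:=c) G).
Qed.

Lemma c3b (T : finType) (adj : rel T) (K0 K1 K2 K3 K4 : {set T}) (z a c d : T) :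
  simple_graph adj -> ~ has_induced_C adj 6 ->
  a \in K4 -> c \in K0 -> d \in K1 ->
  (exists2 q, q \in K2 & adj d q) ->
  (forall q a, q \in K2 -> a \in K4 -> exists2 r, r \in K3 & adj q r && adj r a) ->
  (forall v, v \in K2 -> ~~ adj z v) -> (forall v, v \in K3 -> ~~ adj z v) ->
  anticomplete adj K1 K3 -> anticomplete adj K1 K4 -> anticomplete adj K2 K4 ->
  anticomplete adj K2 K0 -> anticomplete adj K3 K0 ->
  adj a c -> adj c z -> adj z d -> ~~ adj a z -> ~~ adj c d -> False.
Proof.
move=> G nC6 Ha Hc Hd [q Hq hdq] g1 nz2 nz3 a13 a14 a24 a20 a30 hac hcz hzd naz ncd.
have [sym irr] := G.
have [r Hr /andP [hqr hra]] := g1 q a Hq Ha.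
have nzr := nz3 r Hr. have nzq := nz2 q Hq.
have ndr := a13 d r Hd Hr. have nda := a14 d a Hd Ha. have nqa := a24 q a Hq Ha.
have nrc := a30 r c Hr Hc. have nqc := a20 q c Hq Hc.
have e1 : adj a c = true := hac. have e2 : adj c z = true := hcz.
have e3 : adj z d = true := hzd. have e4 : adj d q = true := hdq.
have e5 : adj q r = true := hqr. have e6 : adj r a = true := hra.
clear hac hcz hzd hdq hqr hra.
tobool. mksym sym.
by apply: nC6; apply: (mkC6 (a0:=z) (a1:=d) (a2:=q) (a3:=r) (a4:=a) (a5:=c) G).
Qed.

Lemma g1_aux (T : finType) (adj : rel T) (X Y Z : {set T}) (a d : T) :
  simple_graph adj ->
  (forall a b c d, a \in X -> b \in Y -> c \in Y -> b != c -> d \in Z ->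
     ~ induces_P4 adj a b c d) ->
  is_clique adj Y -> anticomplete adj X Z -> a \in X -> d \in Z ->
  (exists2 b, b \in Y & adj a b) -> (exists2 c, c \in Y & adj d c) ->
  exists2 c, c \in Y & adj a c && adj c d.
Proof.
move=> G p4 cl ac Ha Hd [b Hb hab] [c Hc hdc].
have [sym irr] := G.
case hbd : (adj b d); first by exists b => //; rewrite hab.
case hac : (adj a c); first by exists c => //; rewrite hac sym.
have bc : b != c by apply/eqP => E; subst; rewrite sym hdc in hbd.
exfalso; apply: (p4 a b c d Ha Hb Hc bc Hd).
apply: (mkP4 G) => //.
- by apply: cl.
- by rewrite sym.
- by apply/negbTE; apply: ac.
Qed.

Lemma val_nxt (j : 'I_5) : nat_of_ord (nxt j) = (j + 1) %% 5.
Proof. by rewrite /nxt inordK // ltn_pmod. Qed.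
Lemma val_prv (j : 'I_5) : nat_of_ord (prv j) = (j + 4) %% 5.
Proof. by rewrite /prv inordK // ltn_pmod. Qed.
Lemma nxt5 (j : 'I_5) : nxt (nxt (nxt (nxt (nxt j)))) = j.
Proof. apply/val_inj => /=; rewrite !val_nxt; case: j => [[|[|[|[|[|m]]]]] Hm] //=. Qed.
Lemma prv4 (j : 'I_5) : prv j = nxt (nxt (nxt (nxt j))).
Proof. apply/val_inj => /=; rewrite !val_nxt val_prv; case: j => [[|[|[|[|[|m]]]]] Hm] //=. Qed.
Lemma ne1 (j : 'I_5) : nxt j != j.
Proof. rewrite -(inj_eq val_inj) /= !val_nxt; case: j => [[|[|[|[|[|m]]]]] Hm] //=. Qed.
Lemma ne2 (j : 'I_5) : nxt (nxt j) != j.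
Proof. rewrite -(inj_eq val_inj) /= !val_nxt; case: j => [[|[|[|[|[|m]]]]] Hm] //=. Qed.
Lemma nxt_inj (j k : 'I_5) : nxt j = nxt k -> j = k.
Proof. by move=> E; rewrite -(nxt5 j) -(nxt5 k) E. Qed.

Lemma acsym (T : finType) (adj : rel T) (X Y : {set T}) :
  symmetric adj -> anticomplete adj X Y -> anticomplete adj Y X.
Proof. by move=> sym ac a b Ha Hb; rewrite sym; apply: ac. Qed.

Lemma notin_vert (T : finType) (B : 'I_5 -> {set T}) x j :
  x \notin vert B -> x \in B j = false.
Proof. by move=> H; apply/negP => Hx; move/negP: H; apply; apply/bigcupP; exists j. Qed.

Lemma prvn (j : 'I_5) : prv (nxt j) = j.
Proof. by rewrite prv4 nxt5. Qed.

Lemma addable (T : finType) (adj : rel T) (B : 'I_5 -> {set T}) (i : 'I_5) (x : T) :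
  simple_graph adj -> ~ has_induced_C adj 6 -> ~ has_induced_C adj 7 ->
  nice_blowup adj B -> x \notin vert B ->
  (forall w, w \in B i -> adj x w) ->
  (exists2 v, v \in B (nxt i) & adj x v) ->
  (exists2 v, v \in B (nxt (nxt (nxt (nxt i)))) & adj x v) ->
  (forall v, v \in B (nxt (nxt i)) -> ~~ adj x v) ->
  (forall v, v \in B (nxt (nxt (nxt i))) -> ~~ adj x v) ->
  exists B' : 'I_5 -> {set T}, nice_blowup adj B' /\ vert B \proper vert B'.
Proof.
move=> G nC6 nC7 [dis [cl [nb [ac p4]]]] xnv xc [v1 Hv1 hx1] [v4 Hv4 hx4] nx2 nx3.
have [sym irr] := G.
pose B' := fun j => if j == i then x |: B i else B j.
have memB : forall k v, v \in B' k = ((k == i) && (v == x)) || (v \in B k).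
  move=> k v; rewrite /B'; case: (k =P i) => [->|] //=; by rewrite in_setU1.
have subB : forall k v, v \in B k -> v \in B' k by move=> k v H; rewrite memB H orbT.
have caseB : forall k v, v \in B' k -> (k = i /\ v = x) \/ v \in B k.
  by move=> k v; rewrite memB => /orP [/andP [/eqP -> /eqP ->]|]; [left|right].
have xB : forall j, x \in B j = false by move=> j; apply: notin_vert.
exists B'; split; last first.
  apply/properP; split.
    apply/subsetP => v /bigcupP [j _ Hv]; apply/bigcupP; exists j => //; exact: subB.
  exists x => //; apply/bigcupP; exists i => //; by rewrite memB !eqxx.
set i1 := nxt i. set i2 := nxt i1. set i3 := nxt i2. set i4 := nxt i3.
have e5 : nxt i4 = i by apply: nxt5.
have e6 : nxt (nxt i4) = i1 by rewrite e5.
have p1 : prv i1 = i by apply: prvn.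
have p2 : prv i2 = i1 by apply: prvn.
have p3 : prv i3 = i2 by apply: prvn.
have p4' : prv i4 = i3 by apply: prvn.
have p0 : prv i = i4 by rewrite prv4.
have ac02 := ac i. have ac13 := ac i1. have ac24 := ac i2.
have ac30 : anticomplete adj (B i3) (B i) by rewrite -e5; apply: ac.
have ac41 : anticomplete adj (B i4) (B i1) by rewrite -e6; apply: ac.
have g123 : forall d r, d \in B i1 -> r \in B i3 ->
    exists2 q, q \in B i2 & adj d q && adj q r.
  move=> d r Hd Hr; apply: (g1_aux G (p4 i1) (cl i2) ac13 Hd Hr).
    exact: (nb i1 d Hd).2.
  by have := (nb i3 r Hr).1; rewrite p3.
have g234 : forall q a, q \in B i2 -> a \in B i4 ->
    exists2 r, r \in B i3 & adj q r && adj r a.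
  move=> q a Hq Ha; apply: (g1_aux G (p4 i2) (cl i3) ac24 Hq Ha).
    exact: (nb i2 q Hq).2.
  by have := (nb i4 a Ha).1; rewrite p4'.
have nb34 : forall r, r \in B i3 -> exists2 s, s \in B i4 & adj r s.
  by move=> r Hr; exact: (nb i3 r Hr).2.
have nb21 : forall r, r \in B i2 -> exists2 s, s \in B i1 & adj r s.
  by move=> r Hr; have := (nb i2 r Hr).1; rewrite p2.
have clB : forall j, is_clique adj (B' j).
  move=> j v w Hv Hw vw.
  case: (caseB _ _ Hv) => [[Ej Ev]|Hv0]; case: (caseB _ _ Hw) => [[Ej' Ew]|Hw0].
  - by subst v w; rewrite eqxx in vw.
  - by subst j v; apply: xc.
  - by subst j w; rewrite sym; apply: xc.
  - exact: (cl j v w Hv0 Hw0 vw).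
have acB : forall j, anticomplete adj (B' j) (B' (nxt (nxt j))).
  move=> j v w Hv Hw.
  case: (caseB _ _ Hv) => [[Ej Ev]|Hv0]; case: (caseB _ _ Hw) => [[Ej' Ew]|Hw0].
  - by subst j; move: (ne2 i); rewrite Ej' eqxx.
  - by subst j v; apply: nx2.
  - have Ej : j = i3.
      by apply: nxt_inj; apply: nxt_inj; rewrite Ej' e5.
    by subst j w; rewrite sym; apply: nx3.
  - exact: (ac j v w Hv0 Hw0).
split.
  move=> j k jk; rewrite disjoints_subset; apply/subsetP => v Hv; rewrite inE; apply/negP => Hv'.
  case: (caseB _ _ Hv) => [[Ej Ev]|Hv0]; case: (caseB _ _ Hv') => [[Ek Ev']|Hv0'].
  - by subst j k; rewrite eqxx in jk.
  - by subst v; rewrite xB in Hv0'.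
  - by subst v; rewrite xB in Hv0.
  - by have := dis j k jk; rewrite disjoints_subset => /subsetP /(_ v Hv0); rewrite inE Hv0'.
split; first exact: clB.
split.
  move=> j v Hv; case: (caseB _ _ Hv) => [[Ej Ev]|Hv0].
    subst j v; split.
      by exists v4 => //; rewrite p0; apply: subB.
    by exists v1 => //; apply: subB.
  have [[a Ha ha] [b Hb hb]] := nb j v Hv0.
  by split; [exists a | exists b] => //; apply: subB.
split; first exact: acB.
move=> j a b c d Ha Hb Hc bc Hd HP.
have hbc : adj b c := clB (nxt j) b c Hb Hc bc.
have nad : ~~ adj a d := acB j a d Ha Hd.
have PC := P4_cases G HP hbc nad.
have a42 := acsym sym ac24. have a31 := acsym sym ac13. have a20 := acsym sym ac02.
have a14 := acsym sym ac41.
have x4 : exists2 s, s \in B i4 & adj x s by exists v4.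
have x1 : exists2 s, s \in B i1 & adj x s by exists v1.
case: (caseB _ _ Ha) => [[Ej Ea]|Ha0].
  subst j a.
  have Hb0 : b \in B i1.
    by case: (caseB _ _ Hb) => [[E _]|//]; move: (ne1 i); rewrite E eqxx.
  have Hc0 : c \in B i1.
    by case: (caseB _ _ Hc) => [[E _]|//]; move: (ne1 i); rewrite E eqxx.
  have Hd0 : d \in B i2.
    by case: (caseB _ _ Hd) => [[E _]|//]; move: (ne2 i); rewrite E eqxx.
  have nd3 := (nb i2 d Hd0).2.
  case/orP: PC => /andP [/andP [/andP [h1 h2] h3] h4].
    apply: (c1_aux G nC6 nC7 (cl i1) (cl i4) Hb0 Hc0 Hd0 nd3 nb34 x4 nx2 nx3 ac41 a42 a31 h1 h3).
      by rewrite sym.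
    by rewrite sym.
  apply: (c1_aux G nC6 nC7 (cl i1) (cl i4) Hc0 Hb0 Hd0 nd3 nb34 x4 nx2 nx3 ac41 a42 a31 h1 h3).
    by rewrite sym.
  by rewrite sym.
case: (caseB _ _ Hb) => [[Ej Eb]|Hb0].
  have Ej' : j = i4 by apply: nxt_inj; rewrite Ej e5.
  subst j b.
  have Hc0 : c \in B i.
    case: (caseB _ _ Hc) => [[_ E]|]; first by rewrite E eqxx in bc.
    by rewrite e5.
  have Hd0 : d \in B i1.
    case: (caseB _ _ Hd) => [[E _]|]; last by rewrite e6.
    have E' : i1 = i by rewrite -e6.
    by move: (ne1 i); rewrite -/i1 E' eqxx.
  have na3 : exists2 r, r \in B i3 & adj a r by have := (nb i4 a Ha0).1; rewrite p4'.
  case/orP: PC => /andP [/andP [/andP [h1 h2] h3] h4].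
    exact: (c3a G nC6 Ha0 Hc0 Hd0 na3 g123 nx2 nx3 a42 ac41 a31 ac30 a20 h1 h2 h3 h4 (xc c Hc0)).
  apply: (c3b G nC6 Ha0 Hc0 Hd0 (nb i1 d Hd0).2 g234 nx2 nx3 ac13 a14 ac24 a20 ac30 h1 _ h2 h3 h4).
  by rewrite sym; apply: xc.
case: (caseB _ _ Hc) => [[Ej Ec]|Hc0].
  have Ej' : j = i4 by apply: nxt_inj; rewrite Ej e5.
  subst j c.
  have Hb1 : b \in B i by rewrite e5 in Hb0.
  have Hd0 : d \in B i1.
    case: (caseB _ _ Hd) => [[E _]|]; last by rewrite e6.
    have E' : i1 = i by rewrite -e6.
    by move: (ne1 i); rewrite -/i1 E' eqxx.
  have na3 : exists2 r, r \in B i3 & adj a r by have := (nb i4 a Ha0).1; rewrite p4'.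
  case/orP: PC => /andP [/andP [/andP [h1 h2] h3] h4].
    apply: (c3b G nC6 Ha0 Hb1 Hd0 (nb i1 d Hd0).2 g234 nx2 nx3 ac13 a14 ac24 a20 ac30 h1 _ h2 h3 h4).
    by rewrite sym; apply: xc.
  exact: (c3a G nC6 Ha0 Hb1 Hd0 na3 g123 nx2 nx3 a42 ac41 a31 ac30 a20 h1 h2 h3 h4 (xc b Hb1)).
case: (caseB _ _ Hd) => [[Ej Ed]|Hd0]; last exact: (p4 j a b c d Ha0 Hb0 Hc0 bc Hd0 HP).
have Ej' : j = i3 by apply: nxt_inj; apply: nxt_inj; rewrite Ej e5.
subst j d.
have na2 : exists2 r, r \in B i2 & adj a r by have := (nb i3 a Ha0).1; rewrite p3.
case/orP: PC => /andP [/andP [/andP [h1 h2] h3] h4].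
  apply: (c1_aux G nC6 nC7 (cl i4) (cl i1) Hc0 Hb0 Ha0 na2 nb21 x1 nx3 nx2 a14 ac13 ac24 _ _ h1 h3).
    by rewrite sym.
  by rewrite sym.
apply: (c1_aux G nC6 nC7 (cl i4) (cl i1) Hb0 Hc0 Ha0 na2 nb21 x1 nx3 nx2 a14 ac13 ac24 _ _ h1 h3).
  by rewrite sym.
by rewrite sym.
Qed.

Lemma notsupp2 (i : 'I_5) : nxt (nxt i) \notin [set prv i; i; nxt i].
Proof.
rewrite !inE -!(inj_eq val_inj) /= !val_nxt val_prv.
by case: i => [[|[|[|[|[|m]]]]] Hm].
Qed.
Lemma notsupp3 (i : 'I_5) : nxt (nxt (nxt i)) \notin [set prv i; i; nxt i].
Proof.
rewrite !inE -!(inj_eq val_inj) /= !val_nxt val_prv.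
by case: i => [[|[|[|[|[|m]]]]] Hm].
Qed.

Lemma A3_facts (T : finType) (adj : rel T) (B : 'I_5 -> {set T}) (i : 'I_5) (x : T) :
  x \in A3 adj B i ->
  [/\ x \notin vert B,
      (exists2 v, v \in B (nxt i) & adj x v),
      (exists2 v, v \in B (nxt (nxt (nxt (nxt i)))) & adj x v),
      (forall v, v \in B (nxt (nxt i)) -> ~~ adj x v) &
      (forall v, v \in B (nxt (nxt (nxt i))) -> ~~ adj x v)].
Proof.
rewrite inE => /andP [xnv /eqP sx].
have xnb : forall j, j \in [set prv i; i; nxt i] -> exists2 v, v \in B j & adj x v.
  move=> j Hj; have : j \in supp adj B x by rewrite sx.
  by rewrite inE => /existsP [v /andP [Hv hv]]; exists v.
have xan : forall j, j \notin [set prv i; i; nxt i] -> forall v, v \in B j -> ~~ adj x v.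
  move=> j Hj v Hv; apply/negP => hv.
  have : j \in supp adj B x by rewrite inE; apply/existsP; exists v; rewrite Hv hv.
  by rewrite sx => Hj'; rewrite Hj' in Hj.
split => //.
- by apply: xnb; rewrite !inE eqxx !orbT.
- by rewrite -prv4; apply: xnb; rewrite !inE eqxx.
- by apply: xan; apply: notsupp2.
- by apply: xan; apply: notsupp3.
Qed.

Lemma main_half (T : finType) (adj : rel T) (B : 'I_5 -> {set T}) (i : 'I_5)
  (x y u : T) :
  simple_graph adj -> ~ has_induced_C adj 4 ->
  ~ has_induced_C adj 6 -> ~ has_induced_C adj 7 ->
  maximal_nice_blowup adj B ->
  x \in A3 adj B i -> y \in A3 adj B i -> adj x y ->
  u \in B i -> adj x u -> ~~ adj y u -> False.
Proof.
move=> G nC4 nC6 nC7 [nbB nmax] Hx Hy hxy Hu hxu nyu.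
have [sym irr] := G.
have [xnv x1 x4 nx2 nx3] := A3_facts Hx.
have [ynv y1 y4 ny2 ny3] := A3_facts Hy.
have [dis [cl [nb [ac p4]]]] := nbB.
have xc : forall w, w \in B i -> adj x w; last first.
  by apply: nmax; apply: (addable G nC6 nC7 nbB xnv xc x1 x4 nx2 nx3).
set i1 := nxt i. set i2 := nxt i1. set i3 := nxt i2. set i4 := nxt i3.
have e5 : nxt i4 = i by apply: nxt5.
have e6 : nxt (nxt i4) = i1 by rewrite e5.
have p0 : prv i = i4 by rewrite prv4.
have ac41 : anticomplete adj (B i4) (B i1) by rewrite -e6; apply: ac.
have a14 := acsym sym ac41.
have d01 : [disjoint B i & B i1] by apply: dis; rewrite eq_sym ne1.
have d04 : [disjoint B i & B i4] by apply: dis; move: (ne1 i4); rewrite e5.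
have d14 : [disjoint B i1 & B i4] by apply: dis; move: (ne2 i4); rewrite e6.
have d41 : [disjoint B i4 & B i1] by rewrite disjoint_sym.
have xB : forall j, x \in B j = false by move=> j; apply: notin_vert.
have yB : forall j, y \in B j = false by move=> j; apply: notin_vert.
move=> w Hw; apply/contraT => nxw; exfalso.
have uw : u != w by apply/eqP => E; subst w; rewrite hxu in nxw.
have huw : adj u w := cl i u w Hu Hw uw.
have xw : x != w by apply/eqP => E; subst w; rewrite xB in Hw.
have yu : y != u by apply/eqP => E; subst u; rewrite yB in Hu.
have nyw : ~~ adj y w.
  apply/negP => hyw.
  apply: (noC4 G nC4 (a:=x) (b:=u) (c:=w) (d:=y)) => //; try by rewrite sym.
  by rewrite eq_sym.
have u1 : u \in B i1 = false := disjointFr d01 Hu.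
have u4 : u \in B i4 = false := disjointFr d04 Hu.
have w1 : w \in B i1 = false := disjointFr d01 Hw.
have w4 : w \in B i4 = false := disjointFr d04 Hw.
have nu1 := (nb i u Hu).2. have nw1 := (nb i w Hw).2.
have nu4 : exists2 s, s \in B i4 & adj u s by rewrite -p0; exact: (nb i u Hu).1.
have nw4 : exists2 s, s \in B i4 & adj w s by rewrite -p0; exact: (nb i w Hw).1.
case: (boolP [exists s, (s \in B i4) && (adj x s && adj w s)]) => [/existsP [s /and3P [Hs hxs hws]] | /existsPn Hno].
  case: (boolP [exists p, (p \in B i1) && (adj x p && adj w p)]) => [/existsP [p /and3P [Hp hxp hwp]] | /existsPn Hno1].
    apply: (noC4 G nC4 (a:=x) (b:=p) (c:=w) (d:=s)) => //; try by rewrite sym.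
    - exact: (a14 p s Hp Hs).
    - by apply/eqP => E; subst p; rewrite (disjointFr d41 Hs) in Hp.
  apply: (a_aux (x:=x) (y:=y) (u:=u) (w:=w) G nC4 nC6 (cl i4) (cl i1) d41 ac41) => //;
    rewrite ?xB ?yB ?u1 ?u4 ?w1 ?w4 //.
  by move=> t Ht hxt; move: (Hno1 t); rewrite Ht hxt.
apply: (a_aux (x:=x) (y:=y) (u:=u) (w:=w) G nC4 nC6 (cl i1) (cl i4) d14 a14) => //;
  rewrite ?xB ?yB ?u1 ?u4 ?w1 ?w4 //.
by move=> t Ht hxt; move: (Hno t); rewrite Ht hxt.
Qed.

Theorem lemma8p3 (T : finType) (adj : rel T) (B : 'I_5 -> {set T}) (i : 'I_5)
  (x y : T) :
  simple_graph adj ->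
  ~ has_induced_P adj 7 -> ~ has_induced_C adj 4 ->
  ~ has_induced_C adj 6 -> ~ has_induced_C adj 7 ->
  maximal_nice_blowup adj B ->
  x \in A3 adj B i -> y \in A3 adj B i -> adj x y ->
  nbhd_in adj (B i) x = nbhd_in adj (B i) y.
Proof.
move=> G nP7 nC4 nC6 nC7 Hmax Hx Hy hxy.
have [sym irr] := G.
apply/setP => v; rewrite !inE; case Hv: (v \in B i) => //=.
case hx: (adj x v); case hy: (adj y v) => //.
  by elim: (main_half G nC4 nC6 nC7 Hmax Hx Hy hxy Hv hx (negbT hy)).
have hyx : adj y x by rewrite sym.
by elim: (main_half G nC4 nC6 nC7 Hmax Hy Hx hyx Hv hy (negbT hx)).
Qed.
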